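(* Let $p$ be a prime and $G$ a finite Abelian $p$-group. Then $R_{\mathbb Q}(G\times C_p)=R(G,C_p)\oplus\mathbb Z\cdot 1_{G\times C_p}$ (internal direct sum of Abelian groups), where $1_{G\times C_p}$ is the class of the trivial representation $\mathbb Q$.
   Context: $R_{\mathbb Q}(\Gamma)$ is the rational representation ring of a finite group $\Gamma$. $R(G,C_p)\subseteq R_{\mathbb Q}(G\times C_p)$ is the subgroup generated by the isomorphism classes of finitely generated $\mathbb Q[G\times C_p]$-modules whose restriction to the subgroup $1\times C_p$ is a free $\mathbb Q[C_p]$-module. *)

(* Defs.v *)
From HB Require Import structures.
From mathcomp Require Import all_boot all_order all_algebra.
From mathcomp Require Import all_fingroup all_solvable all_field all_character.
Set Implicit Arguments. Unset Strict Implicit. Unset Printing Implicit Defensive.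
Import GRing.Theory Num.Theory.
Local Open Scope ring_scope.

Lemma triv_mx_repr (F : fieldType) (gT : finGroupType) (H : {group gT}) (m : nat) :
  mx_repr H (fun _ : gT => (1%:M : 'M[F]_m)).
Proof. by split=> // x y _ _; rewrite mulmx1. Qed.
Definition triv_repr (F : fieldType) (gT : finGroupType) (H : {group gT}) (m : nat) :=
  MxRepresentation (@triv_mx_repr F gT H m).

(* m copies (direct sum) of a representation: tensor with the trivial rep. of dim m;
   the representation of a free F[H]-module of rank m is  mcopies m (regular_repr F H). *)
Definition mcopies (F : fieldType) (gT : finGroupType) (H : {group gT}) (m n : nat)
  (rH : mx_representation F H n) : mx_representation F H (m * n) :=
  prod_repr (triv_repr F H m) rH.

(* A rational representation (finitely generated Q[K]-module) of K. *)
Definition qrep (gT : finGroupType) (K : {group gT}) := {n : nat & mx_representation rat K n}.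

(* The class of a Q[K]-module in R_Q(K), represented by its character
   (computed in algC after extending scalars Q -> algC). *)
Definition qclass (gT : finGroupType) (K : {group gT}) (M : qrep K) : 'CF(K) :=
  cfRepr (map_repr (GRing.RMorphism.clone _ _ (@ratr algC) _) (projT2 M)).

Definition gen_subgroup (gT : finGroupType) (K : {group gT}) (P : qrep K -> Prop)
  (phi : 'CF(K)) : Prop :=
  exists s : seq (int * qrep K),
    foldr (fun z Q => P z.2 /\ Q) True s /\ phi = \sum_(z <- s) qclass z.2 *~ z.1.

Definition RQ (gT : finGroupType) (K : {group gT}) : 'CF(K) -> Prop :=
  gen_subgroup (fun _ => True).

Definition free_on (gT : finGroupType) (K C : {group gT}) (sCK : C \subset K)
  (M : qrep K) : Prop :=
  exists m : nat, mx_rsim (subg_repr (projT2 M) sCK) (mcopies m (regular_repr rat C)).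

Definition Rfree (gT : finGroupType) (K C : {group gT}) (sCK : C \subset K) :
  'CF(K) -> Prop := gen_subgroup (free_on sCK).

Definition one_class (gT : finGroupType) (K : {group gT}) : 'CF(K) :=
  qclass (existT _ 1%N (triv_repr rat K 1) : qrep K).

(* Main.v *)
Require Import Defs.
From Stdlib Require List.
From HB Require Import structures.
From mathcomp Require Import all_boot all_order all_algebra.
From mathcomp Require Import all_fingroup all_solvable all_field all_character.
From mathcomp Require Import ring.
Import GRing.Theory Num.Theory.
Local Open Scope ring_scope.

Module Aux.
Set Implicit Arguments. Unset Strict Implicit. Unset Printing Implicit Defensive.
Import Order.TTheory.
Lemma poly_step n (M0 M1 : 'M[algC]_n) (l : algC) :
  \det (M0 + l *: M1) != 0 -> exists q : rat, \det (M0 + ratr q *: M1) != 0.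
Proof.
move=> Hl.
pose P : {poly algC} := \det (map_mx polyC M0 + 'X *: map_mx polyC M1).
have PE z : P.[z] = \det (M0 + z *: M1).
  rewrite /P -horner_evalE -det_map_mx; congr (\det _); apply/matrixP=> i j.
  by rewrite !mxE /= horner_evalE !hornerE.
have P0 : P != 0 by apply: contraNneq Hl => P0; rewrite -PE P0 horner0.
set rs := [seq (i%:R : algC) | i <- iota 0 (size P)].
have U : uniq rs.
  rewrite map_inj_uniq ?iota_uniq // => i j /eqP; rewrite eqC_nat => /eqP //.
have : ~~ all (root P) rs.
  apply/negP => Hall; move: (max_poly_roots P0 Hall U).
  by rewrite size_map size_iota ltnn.
case/allPn => _ /mapP[i _ ->]; rewrite /root PE => Hi.
by exists i%:R; rewrite rmorph_nat.
Qed.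
Lemma det_descent n k (As : 'I_k -> 'M[rat]_n) (N0 : 'M[rat]_n) (lam : 'I_k -> algC) :
  \det (map_mx ratr N0 + \sum_i lam i *: map_mx ratr (As i)) != 0 ->
  exists mu : 'I_k -> rat, \det (N0 + \sum_i mu i *: As i) != 0.
Proof.
elim: k As N0 lam => [|k IH] As N0 lam.
  rewrite big_ord0 addr0 det_map_mx fmorph_eq0 => H.
  by exists (fun _ => 0); rewrite big_ord0 addr0.
rewrite big_ord_recl addrA addrAC => H.
have [q Hq] := poly_step H.
have := IH (fun i => As (lift ord0 i)) (N0 + q *: As ord0) (fun i => lam (lift ord0 i)).
rewrite map_mxD map_mxZ addrAC => /(_ Hq) [mu' Hmu'].
exists (fun i => if unlift ord0 i is Some j then mu' j else q).
rewrite big_ord_recl unlift_none addrA.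
under eq_bigr => i _ do rewrite liftK.
exact Hmu'.
Qed.

Lemma ursub_vec_mul n k (v : 'rV[algC]_k) (Cm : 'M[rat]_(k, (n + n) * (n + n))) :
  ursubmx (vec_mx (v *m map_mx ratr Cm) : 'M_(n + n, n + n))
  = \sum_i v 0 i *: map_mx ratr (ursubmx (vec_mx (row i Cm) : 'M_(n + n, n + n))).
Proof.
apply/matrixP=> i j; rewrite !mxE summxE; apply: eq_bigr => l _.
by rewrite !mxE.
Qed.

Lemma ursub_vec_mul_rat n k (v : 'rV[rat]_k) (Cm : 'M[rat]_(k, (n + n) * (n + n))) :
  ursubmx (vec_mx (v *m Cm) : 'M_(n + n, n + n))
  = \sum_i v 0 i *: ursubmx (vec_mx (row i Cm) : 'M_(n + n, n + n)).
Proof.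
apply/matrixP=> i j; rewrite !mxE summxE; apply: eq_bigr => l _.
by rewrite !mxE.
Qed.

Lemma rsim_descent (gT : finGroupType) (H : {group gT}) n
  (rA rB : mx_representation rat H n) (B : 'M[algC]_n) :
  B \in unitmx ->
  (forall x, x \in H -> map_mx ratr (rA x) *m B = B *m map_mx ratr (rB x)) ->
  mx_rsim rA rB.
Proof.
move=> uB hB.
pose D := dadd_grepr (Representation rA) (Representation rB).
pose E := enveloping_algebra_mx (G := H) D.
pose Cm := cent_mx E.
pose X : 'M[algC]_(n + n) := block_mx 0 B 0 0.
have sX : (mxvec X <= map_mx ratr Cm)%MS.
  rewrite map_cent_mx map_enveloping_algebra_mx; apply/cent_rowP => i.
  rewrite rowK mxvecK /= /map_repr_mx map_block_mx !map_mx0 /X !mulmx_block.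
  rewrite !(mulmx0, mul0mx, addr0, add0r) hB //; exact: enum_valP.
have [v Dv] := submxP sX.
have : \det (map_mx ratr 0 + \sum_i v 0 i *: map_mx ratr
          (ursubmx (vec_mx (row i Cm) : 'M_(n + n, n + n)))) != 0.
  rewrite map_mx0 add0r -ursub_vec_mul -Dv mxvecK /X block_mxKur.
  by rewrite -unitfE -unitmxE.
case/det_descent => mu; rewrite add0r => Hmu.
pose w := \row_i mu i.
pose Y : 'M[rat]_(n + n) := vec_mx (w *m Cm).
have YE : ursubmx Y = \sum_i mu i *: ursubmx (vec_mx (row i Cm) : 'M_(n + n, n + n)).
  by rewrite /Y ursub_vec_mul_rat; apply: eq_bigr => i _; rewrite mxE.
have cY : (Y \in Cm)%MS by rewrite /Y vec_mxK submxMl.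
exists (ursubmx Y) => //.
  by rewrite row_free_unit unitmxE unitfE YE.
move=> x Hx.
have := cent_mxP cY (D x) (envelop_mx_id D Hx).
rewrite -[Y]submxK /= !mulmx_block !(mulmx0, mul0mx, addr0, add0r).
by move/(congr1 ursubmx); rewrite !block_mxKur.
Qed.


Lemma qclassE (gT : finGroupType) (K : {group gT}) (M : qrep K) x :
  x \in K -> qclass M x = ratr (\tr (projT2 M x)).
Proof. by move=> Kx; rewrite /qclass cfunE Kx mulr1n /= trace_map_mx. Qed.

Lemma rsim_tr (gT : finGroupType) (H : {group gT}) n1 n2
  (rA : mx_representation rat H n1) (rB : mx_representation rat H n2) :
  (forall x, x \in H -> \tr (rA x) = \tr (rB x)) -> mx_rsim rA rB.
Proof.
move=> htr.
have : cfRepr (map_repr ratr rA) == cfRepr (map_repr ratr rB).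
  apply/eqP/cfun_inP => x Hx; rewrite !cfunE Hx !mulr1n /=.
  by rewrite !trace_map_mx htr.
move/cfRepr_rsimP => [B e12]; move: rA htr B; rewrite e12 => rA htr B fB hB.
apply: (rsim_descent (B := B)); first by rewrite -row_free_unit.
exact: hB.
Qed.


Lemma conj_diag_exp (F : fieldType) n (B : 'M[F]_n) (e : 'rV[F]_n) k :
  B \in unitmx ->
  (invmx B *m diag_mx e *m B) ^+ k = invmx B *m diag_mx (\row_i e 0 i ^+ k) *m B.
Proof.
move=> uB; elim: k => [|k IH].
  rewrite expr0 (_ : \row_i _ = const_mx 1); last by apply/rowP => i; rewrite !mxE.
  by rewrite diag_const_mx mulmx1 mulVmx.
rewrite exprS IH -!mulmxE -!mulmxA (mulmxA B) mulmxV // mul1mx.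
rewrite !mulmxA.
rewrite -(mulmxA (invmx B) (diag_mx e)) mulmx_diag; congr (_ *m _ *m _); congr diag_mx.
by apply/rowP => i; rewrite !mxE exprS.
Qed.

Lemma tr_powC (gT : finGroupType) (K : {group gT}) n
  (rM : mx_representation rat K n) x k :
  x \in K -> coprime k #[x]%g -> \tr (rM (x ^+ k)%g) = \tr (rM x).
Proof.
case: n rM => [|n] rM Kx ck; first by rewrite !flatmx0.
apply: (fmorph_inj (ratr : {rmorphism rat -> algC})).
have [u Du] := Qn_aut_exists ck.
pose rG := map_repr (ratr : {rmorphism rat -> algC}) rM.
have [e [[B uB DrG] [e1 _] _ _]] := repr_rsim_diag rG Kx.
have trG y : y \in K -> (ratr : {rmorphism rat -> algC}) (\tr (rM y)) = \tr (rG y).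
  by move=> _; rewrite /= trace_map_mx.
rewrite trG ?groupX //.
transitivity (u ((ratr : {rmorphism rat -> algC}) (\tr (rM x)))); last first.
  exact: fmorph_rat.
rewrite trG // (repr_mxX rG) // DrG.
rewrite conj_diag_exp //.
rewrite mxtrace_mulC mulmxA mulmxV // mul1mx.
rewrite mxtrace_mulC mulmxA mulmxV // mul1mx.
rewrite !mxtrace_diag rmorph_sum; apply: eq_bigr => i _.
by rewrite mxE Du.
Qed.


Section Infl.
Variables (gT : finGroupType) (G C K : {group gT}).
Hypothesis dGC : (G \x C)%g = K.

Lemma remgr_mem x : x \in K -> remgr G C x \in C.
Proof.
have [_ defK _ _] := dprodP dGC.
by move=> Kx; apply: mem_remgr; rewrite defK.
Qed.

Lemma remgrC c : c \in C -> remgr G C c = c.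
Proof.
have [_ _ _ tiGC] := dprodP dGC.
by move=> Cc; rewrite -{1}[c]mul1g remgrMid.
Qed.

Lemma remgrM x y : x \in K -> y \in K ->
  remgr G C (x * y)%g = (remgr G C x * remgr G C y)%g.
Proof.
have [_ defK cGC tiGC] := dprodP dGC.
rewrite -defK => /mulsgP[a1 c1 Ga1 Cc1 ->] /mulsgP[a2 c2 Ga2 Cc2 ->].
have cc : commute c1 a2.
  exact: (centsP cGC) c1 Cc1 a2 Ga2.
rewrite mulgA -(mulgA a1) cc !mulgA -mulgA !remgrMid ?groupM //.
Qed.

Lemma infl_mx_repr : mx_repr K (fun g => regular_repr rat C (remgr G C g)).
Proof.
split=> [|x y Kx Ky]; first by rewrite remgrC // repr_mx1.
by rewrite remgrM // repr_mxM // remgr_mem.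
Qed.
Definition infl_repr := MxRepresentation infl_mx_repr.

End Infl.


Section Rho.
Variables (gT : finGroupType) (G C K : {group gT}).
Hypothesis dGC : (G \x C)%g = K.

Let ones : 'M[rat]_(gcard C, 1) := const_mx 1.

Lemma reg_ones y : regular_repr rat C y *m ones = ones.
Proof.
apply/row_matrixP => i; rewrite row_mul rowK -rowE /ones.
by apply/rowP => j; rewrite !mxE.
Qed.

Lemma rho_mod : mxmodule (infl_repr dGC) (kermx ones).
Proof.
apply/mxmoduleP => x Kx; rewrite sub_kermx /= -mulmxA reg_ones.
by rewrite mulmx_ker.
Qed.

Definition rho_repr := submod_repr rho_mod.

Lemma rank_ones : \rank ones = 1%N.
Proof.
apply/eqP; rewrite eqn_leq rank_leq_col lt0n mxrank_eq0.
apply/eqP => /matrixP/(_ (Ordinal (cardG_gt0 C)) 0).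
by rewrite !mxE => /eqP; rewrite oner_eq0.
Qed.

Lemma tr_rho x : x \in K -> \tr (rho_repr x) = \tr (infl_repr dGC x) - 1.
Proof.
move=> Kx; rewrite -(mxtrace_sub_fact_mod rho_mod x).
have -> : factmod_repr rho_mod x = 1%:M.
  rewrite /= /factmod_mx.
  rewrite -[RHS](val_factmodK (U := kermx ones)) .
  apply/eqP; rewrite -subr_eq0 -linearB /= in_factmod_eq0 sub_kermx.
  by rewrite mulmxBl -mulmxA reg_ones subrr.
have r1 : \rank (cokermx (kermx ones)) = 1%N.
  by rewrite mxrank_coker mxrank_ker rank_ones subKn ?cardG_gt0.
by rewrite mxtrace1 r1 addrK.
Qed.

End Rho.


Lemma tr_reg (gT : finGroupType) (C : {group gT}) c : c \in C ->
  \tr (regular_repr rat C c) = #|C|%:R *+ (c == 1%g).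
Proof.
move=> Cc; apply: (fmorph_inj (ratr : {rmorphism rat -> algC})).
rewrite rmorphMn rmorph_nat -trace_map_mx.
have -> : map_mx ratr (regular_repr rat C c) = regular_repr algC C c.
  exact: (map_regular_repr (ratr : {rmorphism rat -> algC})).
have := congr1 (fun phi : 'CF(C) => phi c) (cfReprReg C).
by rewrite cfunE Cc mulr1n cfRegE.
Qed.

Lemma order_prime_elt (gT : finGroupType) (C : {group gT}) p c :
  prime p -> #|C| = p -> c \in C -> c != 1%g -> #[c]%g = p.
Proof.
move=> pp cC Cc nc; apply/(prime_nt_dvdP pp); first by rewrite order_eq1.
by rewrite -cC order_dvdG.
Qed.

Lemma tr_const (gT : finGroupType) (C : {group gT}) p n
  (rN : mx_representation rat C n) c d :
  prime p -> #|C| = p -> c \in C -> c != 1%g -> d \in C -> d != 1%g ->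
  \tr (rN d) = \tr (rN c).
Proof.
move=> pp cC Cc nc Cd nd.
have oc := order_prime_elt pp cC Cc nc.
have ecC : <[c]>%g = C.
  apply/eqP; rewrite eqEcard cycle_subG Cc /= -orderE oc cC leqnn //.
have : d \in <[c]>%g by rewrite ecC.
case/cycleP => k Dd; rewrite Dd in nd *.
apply: tr_powC => //.
rewrite coprime_sym (order_prime_elt pp cC Cc nc) prime_coprime //.
apply: contra nd; rewrite -order_dvdn.
by rewrite (order_prime_elt pp cC Cc nc).
Qed.

Lemma C_data (gT : finGroupType) (C : {group gT}) p n
  (rN : mx_representation rat C n) :
  prime p -> #|C| = p ->
  exists t : int, exists a : nat,
    (forall c, c \in C -> c != 1%g -> \tr (rN c) = t%:~R) /\
    n%:Z - t = (p * a)%N%:Z.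
Proof.
move=> pp cC.
have : (C :!=: 1)%g by rewrite trivg_card1 cC; case: p pp {cC} => [|[]].
case/trivgPn => c0 Cc0 nc0.
pose chi := cfRepr (map_repr (ratr : {rmorphism rat -> algC}) rN).
have chiE y : y \in C -> chi y = ratr (\tr (rN y)).
  by move=> Cy; rewrite cfunE Cy mulr1n /= trace_map_mx.
have Nchi : chi \is a character by apply: cfRepr_char.
have : chi c0 \is a Num.int.
  by apply: Cint_rat_Aint; [rewrite chiE // Crat_rat | apply: Aint_char].
case/intrP => z Dz.
have tz : \tr (rN c0) = z%:~R.
  by apply: (fmorph_inj (ratr : {rmorphism rat -> algC})); rewrite rmorph_int -Dz chiE.
have ctr c : c \in C -> c != 1%g -> \tr (rN c) = z%:~R.
  by move=> Cc nc; rewrite (tr_const rN pp cC Cc0 nc0 Cc nc).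
have zle : z <= n%:Z.
  have := char1_ge_norm c0 Nchi; rewrite Dz chiE ?group1 // repr_mx1 mxtrace1.
  rewrite rmorph_nat -intr_norm (_ : (n%:R : algC) = (n%:Z)%:~R) // ler_int.
  by move/(le_trans (ler_norm z)).
have : '[chi, 1] \is a Num.nat by apply: Cnat_cfdot_char => //; apply: cfun1_char.
case/natrP => N DN.
have sumE : \sum_(x in C) chi x * ((1 : 'CF(C)) x)^* = (z *+ p + (n%:Z - z))%:~R.
  rewrite (eq_bigr (fun x => z%:~R + (n%:Z - z)%:~R *+ (x == 1%g))); last first.
    move=> x Cx; rewrite cfun1E Cx /= conjC1 mulr1.
    case: eqP => [->|/eqP nx]; last by rewrite mulr0n addr0 chiE // ctr // rmorph_int.
    rewrite mulr1n -intrD addrC subrK chiE // repr_mx1 mxtrace1 rmorph_nat.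
    by [].
  rewrite big_split /= sumr_const cC (bigD1 1%g) ?group1 //= eqxx mulr1n.
  rewrite big1 ?addr0 => [|x /andP[_ /negbTE->]]; last by rewrite mulr0n.
  rewrite [RHS]intrD; congr (_ + _).
  elim: (p) => [|q IH]; first by rewrite !mulr0n.
  by rewrite !mulrS intrD IH.
move: DN; rewrite cfdotE sumE cC => DN.
have eqZ : (N%:Z * p%:Z = z *+ p + (n%:Z - z))%R.
  apply: (@intr_inj algC); rewrite intrM.
  rewrite (_ : ((N%:Z)%:~R : algC) = N%:R) // (_ : ((p%:Z)%:~R : algC) = p%:R) //.
  rewrite -DN mulrC mulrA mulfV ?mul1r //.
  by rewrite pnatr_eq0 -lt0n prime_gt0.
exists z, `|N%:Z - z|%N; split => //.
have p0 : (0 < p)%N by apply: prime_gt0.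
move: eqZ; rewrite -mulr_natr natz => eqZ.
have h1 : (0 <= N%:Z - z)%R.
  have : (0 <= (N%:Z - z) * p%:Z)%R.
    by rewrite mulrBl eqZ addrAC subrr add0r subr_ge0.
  by rewrite pmulr_lge0 // ltz_nat.
rewrite PoszM gez0_abs // mulrC mulrBl eqZ.
by rewrite addrAC subrr add0r.
Qed.


Section Gen.
Variables (gT : finGroupType) (K : {group gT}).
Implicit Types (P : qrep K -> Prop).

Lemma foldr_allP P (s : seq (int * qrep K)) :
  foldr (fun z Q => P z.2 /\ Q) True s <-> (forall z, List.In z s -> P z.2).
Proof.
elim: s => [|w s IH] /=; first by split => // _ z.
split=> [[Pw /IH Hs] z [<-|/Hs]|H] //.
by split; [apply: H; left | apply/IH => z zs; apply: H; right].
Qed.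

Lemma gs0 P : gen_subgroup P 0.
Proof. by exists [::]; rewrite big_nil. Qed.

Lemma gsD P a b : gen_subgroup P a -> gen_subgroup P b -> gen_subgroup P (a + b).
Proof.
case=> s1 [H1 ->] [s2 [H2 ->]]; exists (s1 ++ s2); rewrite big_cat; split => //.
apply/foldr_allP => z /List.in_app_iff [].
  by move/foldr_allP: H1; apply.
by move/foldr_allP: H2; apply.
Qed.

Lemma gsZ P a k : gen_subgroup P a -> gen_subgroup P (a *~ k).
Proof.
case=> s [H ->]; exists [seq (w.1 * k, w.2) | w <- s]; split.
  apply/foldr_allP => z /List.in_map_iff [w [<- ws]] /=; by move/foldr_allP: H; apply.
rewrite big_map mulrz_suml; apply: eq_bigr => w _ /=.
by rewrite mulrzA.
Qed.

Lemma gs1 P M : P M -> gen_subgroup P (qclass M).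
Proof. by move=> PM; exists [:: (1, M)]; rewrite big_seq1 mulr1z. Qed.

Lemma gs_mono P Q a : (forall M, P M -> Q M) -> gen_subgroup P a -> gen_subgroup Q a.
Proof.
move=> PQ [s [H ->]]; exists s; split => //.
by apply/foldr_allP => z zs; apply: PQ; move/foldr_allP: H; apply.
Qed.

Lemma gs_ind P (R : 'CF(K) -> Prop) a :
  R 0 -> (forall a b, R a -> R b -> R (a + b)) -> (forall a k, R a -> R (a *~ k)) ->
  (forall M, P M -> R (qclass M)) -> gen_subgroup P a -> R a.
Proof.
move=> R0 RD RZ RM [s [H ->]].
elim: s H => [|w s IH] /= H; first by rewrite big_nil.
case: H => Pw Hs; rewrite big_cons; apply: RD; last exact: IH.
by apply: RZ; apply: RM.
Qed.
End Gen.


Lemma tr_dadd (F : fieldType) (gT : finGroupType) (H : {group gT})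
  (r1 r2 : representation F H) x :
  \tr (dadd_grepr r1 r2 x) = \tr (r1 x) + \tr (r2 x).
Proof. by rewrite /= mxtrace_block. Qed.

Lemma tr_triv (F : fieldType) (gT : finGroupType) (H : {group gT}) k x :
  \tr (triv_repr F H k x) = k%:R.
Proof. by rewrite /= mxtrace1. Qed.

Lemma tr_mcopies (F : fieldType) (gT : finGroupType) (H : {group gT}) k n
  (r : mx_representation F H n) x :
  \tr (mcopies k r x) = k%:R * \tr (r x).
Proof. by rewrite /mcopies /= mxtrace_prod mxtrace1. Qed.

Lemma cfunMn (gT : finGroupType) (H : {group gT}) (phi : 'CF(H)) n x :
  (phi *+ n) x = phi x *+ n.
Proof.
elim: n => [|n IH]; first by rewrite !mulr0n cfunE.
by rewrite !mulrS cfunE IH.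
Qed.

Lemma cfunMz (gT : finGroupType) (H : {group gT}) (phi : 'CF(H)) z x :
  (phi *~ z) x = phi x *~ z.
Proof.
case: z => n; first exact: cfunMn.
by rewrite !NegzE !mulrNz cfunE; congr (- _); apply: cfunMn.
Qed.

Section Main.
Variables (gT : finGroupType) (p : nat) (G C K : {group gT}).
Hypotheses (sCK : C \subset K) (pp : prime p) (cC : #|C| = p) (dGC : (G \x C)%g = K).

Lemma free_tr d (F : mx_representation rat K d) (m : nat) :
  (forall c, c \in C -> \tr (F c) = m%:R * \tr (regular_repr rat C c)) ->
  free_on sCK (existT _ d F : qrep K).
Proof.
move=> H; exists m; apply: rsim_tr => c Cc.
by rewrite tr_mcopies -H.
Qed.

Lemma free_val (M : qrep K) c : free_on sCK M -> c \in C -> c != 1%g ->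
  qclass M c = 0.
Proof.
case=> m rs Cc nc; rewrite qclassE ?(subsetP sCK) //.
have := mxtrace_rsim rs Cc; rewrite /= => ->.
by rewrite tr_mcopies tr_reg // (negbTE nc) mulr0n mulr0 rmorph0.
Qed.

Lemma one_classE x : x \in K -> one_class K x = 1.
Proof. by move=> Kx; rewrite /one_class qclassE //= mxtrace1 rmorph1. Qed.

Lemma decomp (M : qrep K) :
  exists f, exists k, Rfree sCK f /\ qclass M = f + one_class K *~ k.
Proof.
case: M => n rM.
have [t [a [Ht Hna]]] := C_data (subg_repr rM sCK) pp cC.
pose Infl := infl_repr dGC.
pose Rho := rho_repr dGC.
pose F1 := dadd_grepr (dadd_grepr (Representation rM)
             (Representation (triv_repr rat K (p * a)))) (Representation (mcopies n Rho)).
pose qF1 : qrep K := existT _ (rdegree F1) (mx_repr_of_repr F1).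
pose qI : qrep K := existT _ (gcard C) (infl_repr dGC).
have hna : ((p * a)%N%:R : rat) = n%:R - t%:~R.
  by have := congr1 (fun z : int => (z%:~R : rat)) Hna; rewrite /= intrB.
have trI c : c \in C -> \tr (Infl c) = \tr (regular_repr rat C c).
  by move=> Cc; rewrite /= (remgrC dGC).
have trF1 x : x \in K -> \tr (F1 x) =
    \tr (rM x) + (p * a)%N%:R + n%:R * (\tr (Infl x) - 1).
  by move=> Kx; rewrite !tr_dadd tr_triv tr_mcopies tr_rho.
exists (qclass qF1 + qclass qI *~ (- n%:Z)), t; split.
  rewrite /Rfree; apply: gsD.
    apply: gs1; apply: (free_tr (m := (n + a)%N)) => c Cc.
    rewrite trF1 ?(subsetP sCK) // trI // tr_reg //.
    case: eqP => [->|/eqP nc].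
      rewrite repr_mx1 mxtrace1 mulr1n natrD natrM cC; ring.
    by rewrite mulr0n mulr0 Ht // hna; ring.
  apply: gsZ; apply: gs1; apply: (free_tr (m := 1%N)) => c Cc.
  by rewrite mul1r trI.
apply/cfun_inP => x Kx.
rewrite (_ : (qclass qF1 + qclass qI *~ - n%:Z + one_class K *~ t) x =
   qclass qF1 x + qclass qI x *~ - n%:Z + one_class K x *~ t); last first.
  rewrite cfunE cfunMz; congr (_ + _).
  by rewrite [LHS]cfunE cfunMz.
rewrite one_classE // !qclassE //=.
rewrite (trF1 x Kx).
transitivity (ratr (\tr (rM x) + (p * a)%N%:R + n%:R * (\tr (Infl x) - 1)
   + \tr (Infl x) *~ - n%:Z + t%:~R) : algC); last first.
  by rewrite !rmorphD rmorphMz rmorph_int.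
apply: congr1; rewrite hna -mulrzr; ring.
Qed.

End Main.

End Aux.
Unset Implicit Arguments.
Set Strict Implicit.
Import Aux.

Theorem lemma4p2 (gT : finGroupType) (p : nat) (G C K : {group gT})
  (sCK : C \subset K) :
  prime p -> abelian G -> (p.-group G)%g -> #|C| = p -> (G \x C)%g = K ->
  (forall phi : 'CF(K), RQ phi <->
     exists (a : 'CF(K)) (k : int), Rfree sCK a /\ phi = a + one_class K *~ k) /\
  (forall (a : 'CF(K)) (k : int),
     Rfree sCK a -> a + one_class K *~ k = 0 -> a = 0 /\ k = 0).
Proof.
move=> pp _ _ cC dGC; split.
  move=> phi; split.
    move=> RQphi.
    apply: (gs_ind (R := fun phi => exists a k, Rfree sCK a /\ phi = a + one_class K *~ k)) RQphi.
    - by exists 0, 0; split; [exact: gs0 | rewrite add0r mulr0z].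
    - move=> a b [a1 [k1 [Ha1 ->]]] [b1 [k2 [Hb1 ->]]].
      exists (a1 + b1), (k1 + k2); split; first exact: gsD.
      by rewrite mulrzDr addrACA.
    - move=> a k [a1 [k1 [H ->]]]; exists (a1 *~ k), (k1 * k); split; first exact: gsZ.
      by rewrite mulrzDl mulrzA.
    - by move=> M _; apply: (decomp sCK pp cC dGC).
  case=> a [k [Ha ->]]; apply: gsD.
    by apply: (gs_mono _ Ha).
  by apply: gsZ; apply: gs1.
move=> a k Ha Hsum.
have : (C :!=: 1)%g by rewrite trivg_card1 cC; case: p pp {cC} => [|[]].
case/trivgPn => c0 Cc0 nc0.
have a0 : a c0 = 0.
  apply: (gs_ind (R := fun a : 'CF(K) => a c0 = 0)) Ha.
  - by rewrite cfunE.
  - by move=> a1 b1 h1 h2; rewrite cfunE h1 h2 addr0.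
  - by move=> a1 k1 h1; rewrite cfunMz h1 mul0rz.
  - by move=> M HM; apply: (free_val HM).
have Kc0 : c0 \in K by apply: (subsetP sCK).
have := congr1 (fun phi : 'CF(K) => phi c0) Hsum.
rewrite /= cfunE cfunMz a0 (one_classE Kc0) add0r cfunE => /eqP.
rewrite intr_eq0 => /eqP k0; split => //.
by move: Hsum; rewrite k0 mulr0z addr0.
Qed.
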